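(* Let $m,k,e,\ell$ be integers with $m,k,e$ positive, $0\le\ell\le m$, $k\mid m$, $e\equiv2^\ell\pmod{2^k-1}$ and $\gcd(2^m-1,e)=1$, and let $\eta$ satisfy $\eta e\equiv1\pmod{2^m-1}$. Let $P:\mathbb{F}_{2^k}\to\mathbb{F}_2$ be balanced and let $g:\mathbb{F}_{2^m}\times\mathbb{F}_{2^m}\to\mathbb{F}_2$ be the bent function $g(x,y)=P\bigl({\rm Tr}_k^m(xy^{-\eta})\bigr)$. Then the dual of $g$ is \[ g^{*}(x,y)=P\Bigl({\rm Tr}_k^m\bigl(yx^{-e}\bigr)^{2^{m-\ell}}\Bigr)=P\bigl({\rm Tr}_k^m(\tilde y\,\tilde x^{-e})\bigr),\quad \tilde y=y^{2^{m-\ell}},\ \tilde x=x^{2^{m-\ell}}.\]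
   Context: ${\rm Tr}_k^m$ is the trace map from $\mathbb{F}_{2^m}$ to $\mathbb{F}_{2^k}$. For $z\in\mathbb{F}_{2^m}$ and a positive integer $t$, $z^{-t}$ denotes $z^{t(2^m-2)}$ (so $0^{-t}=0$). $P$ balanced means $|P^{-1}(0)|=|P^{-1}(1)|$. The dual $g^*$ of a bent function $g$ on $\mathbb{F}_{2^m}\times\mathbb{F}_{2^m}$ is defined by $\sum_{(x,y)}(-1)^{g(x,y)+{\rm Tr}_1^m(ux+vy)}=2^m(-1)^{g^*(u,v)}$ for all $(u,v)$. *)

(* Defs.v *)
From HB Require Import structures.
From mathcomp Require Import all_boot all_order all_algebra all_field.
Set Implicit Arguments. Unset Strict Implicit. Unset Printing Implicit Defensive.
Import GRing.Theory.
Local Open Scope ring_scope.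

(* F is meant to be the finite field F_{2^m}. *)

Definition trKM (F : finFieldType) (k m : nat) (z : F) : F :=
  \sum_(i < m %/ k) z ^+ (2 ^ (k * i)).

Definition tr1 (F : finFieldType) (m : nat) (z : F) : F :=
  \sum_(i < m) z ^+ (2 ^ i).

(* z^{-t} := z^{t(2^m-2)}, with 0^{-t} = 0 *)
Definition negpow (F : finFieldType) (m t : nat) (z : F) : F :=
  if z == 0 then 0 else z ^+ (t * (2 ^ m - 2)).

Definition subfK (F : finFieldType) (k : nat) : {set F} :=
  [set z : F | z ^+ (2 ^ k) == z].

(* P : F_{2^k} -> F_2 is balanced (P given on F, only its values on F_{2^k} matter) *)
Definition balancedOn (F : finFieldType) (k : nat) (P : F -> bool) : Prop :=
  #|[set z in @subfK F k | P z]| = #|[set z in @subfK F k | ~~ P z]|.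

(* Walsh transform sum_{x,y} (-1)^{g(x,y) + Tr_1^m(ux+vy)} as an integer;
   Tr_1^m takes values in F_2 = {0,1} \subset F. *)
Definition walsh2 (F : finFieldType) (m : nat) (g : F -> F -> bool) (u v : F) : int :=
  \sum_(x : F) \sum_(y : F)
     ((-1) ^+ (g x y) * (-1) ^+ (tr1 m (u * x + v * y) != 0)).

(* Main.v *)
Require Import Defs.
From HB Require Import structures.
From mathcomp Require Import all_boot all_order all_algebra all_field zify ring.
Set Implicit Arguments. Unset Strict Implicit.
Import GRing.Theory Num.Theory.
Local Open Scope ring_scope.

Lemma add_self (F : finFieldType) (chF : 2%N \in [pchar F]) (x : F) : x + x = 0.
Proof. by rewrite -mulr2n -mulr_natr (pcharf0 chF) mulr0. Qed.

Lemma frobD (F : finFieldType) (chF : 2%N \in [pchar F]) n (a b : F) :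
  (a + b) ^+ (2 ^ n) = a ^+ (2 ^ n) + b ^+ (2 ^ n).
Proof.
elim: n a b => [|n IH] a b; first by rewrite expn0 !expr1.
by rewrite expnS !exprM sqrrD mulr2n add_self // addr0 IH.
Qed.

Lemma zero_pow2 (F : finFieldType) n : (0 : F) ^+ (2 ^ n) = 0.
Proof.
have h : (0 < 2 ^ n)%N by rewrite expn_gt0.
by rewrite -(prednK h) exprS mul0r.
Qed.

Lemma frob_sum (F : finFieldType) (chF : 2%N \in [pchar F]) d (I : finType)
   (f : I -> F) : (\sum_i f i) ^+ (2 ^ d) = \sum_i (f i) ^+ (2 ^ d).
Proof.
apply: (big_morph (fun z : F => z ^+ (2 ^ d))); first exact: frobD.
exact: zero_pow2.
Qed.

Lemma fix_iter (F : finFieldType) d i (z : F) :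
  z ^+ (2 ^ d) = z -> z ^+ (2 ^ (d * i)) = z.
Proof.
move=> hz; elim: i => [|i IH]; first by rewrite muln0 expn0 expr1.
by rewrite mulnS expnD exprM hz IH.
Qed.

Definition S (F : finFieldType) d n (z : F) := \sum_(i < n) z ^+ (2 ^ (d * i)).
Arguments S {F}.

Lemma S_frob (F : finFieldType) d n (z : F) :
  z ^+ (2 ^ (d * n)) = z -> S d n (z ^+ (2 ^ d)) = S d n z.
Proof.
rewrite /S; case: n => [|n] hz; first by rewrite !big_ord0.
rewrite big_ord_recr big_ord_recl /= muln0 expn0 expr1 addrC; congr (_ + _).
  by rewrite -exprM -expnD -mulnS.
by apply: eq_bigr => i _; rewrite -exprM -expnD -mulnS.
Qed.

Lemma S_pow (F : finFieldType) (chF : 2%N \in [pchar F]) d n j (z : F) :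
  (S d n z) ^+ (2 ^ j) = S d n (z ^+ (2 ^ j)).
Proof.
rewrite /S frob_sum //; apply: eq_bigr => i _.
by rewrite -!exprM mulnC.
Qed.

Lemma SD (F : finFieldType) (chF : 2%N \in [pchar F]) d n (a b : F) :
  S d n (a + b) = S d n a + S d n b.
Proof. by rewrite /S -big_split; apply: eq_bigr => i _; rewrite frobD. Qed.

Lemma S0 (F : finFieldType) d n : S d n (0 : F) = 0.
Proof. by rewrite /S big1 // => i _; rewrite zero_pow2. Qed.

Lemma SZ (F : finFieldType) d n (c z : F) :
  c ^+ (2 ^ d) = c -> S d n (c * z) = c * S d n z.
Proof.
move=> hc; rewrite /S mulr_sumr; apply: eq_bigr => i _.
by rewrite exprMn (@fix_iter _ _ i _ hc).
Qed.

Lemma sq01 (F : finFieldType) (t : F) : t ^+ 2 = t -> t = 0 \/ t = 1.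
Proof.
move=> h; have : t * (t - 1) == 0 by rewrite mulrBr mulr1 -expr2 h subrr.
by rewrite mulf_eq0 subr_eq0 => /orP [/eqP|/eqP]; [left|right].
Qed.

Lemma sign_add (F : finFieldType) (chF : 2%N \in [pchar F]) (t1 t2 : F) :
  t1 ^+ 2 = t1 -> t2 ^+ 2 = t2 ->
  (-1 : int) ^+ (t1 + t2 != 0 :> F) = (-1) ^+ (t1 != 0 :> F) * (-1) ^+ (t2 != 0 :> F).
Proof.
move=> /sq01 [] -> /sq01 [] ->; rewrite -signr_addb ?addr0 ?add0r ?add_self //.
all: by rewrite ?oner_neq0 ?eqxx.
Qed.

Lemma sum_split (F : finFieldType) (f : nat -> F) k n :
  \sum_(p < k * n) f p = \sum_(i < n) \sum_(j < k) f (k * i + j)%N.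
Proof.
elim: n => [|n IH]; first by rewrite muln0 !big_ord0.
rewrite big_ord_recr /= -IH.
rewrite -!(big_mkord xpredT) (@big_cat_nat _ _ _ (k * n)) ?leq_pmulr //=; last first.
  by rewrite leq_mul2l leqnSn orbT.
congr (_ + _).
rewrite -{1}(add0n (k * n)%N) big_addn mulnSr addKn big_mkord.
by apply: eq_bigr => j _; rewrite addnC.
Qed.

Lemma S_trans (F : finFieldType) (chF : 2%N \in [pchar F]) k n (z : F) :
  S 1 (k * n) z = S 1 k (S k n z).
Proof.
rewrite /S (@sum_split _ (fun p => z ^+ (2 ^ (1 * p)))) exchange_big /=.
apply: eq_bigr => j _; rewrite frob_sum //; apply: eq_bigr => i _.
by rewrite -exprM -expnD !mul1n.
Qed.

Lemma size_trpoly (F : finFieldType) n :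
  (size (\sum_(i < n) 'X^(2 ^ i) : {poly F})%R <= 2 ^ n)%N.
Proof.
elim: n => [|n IH]; first by rewrite big_ord0 size_poly0.
rewrite big_ord_recr /=; apply: leq_trans (size_polyD _ _) _.
rewrite geq_max size_polyXn expnS; apply/andP; split.
  by apply: leq_trans IH _; rewrite leq_pmull.
have : (0 < 2 ^ n)%N by rewrite expn_gt0.
by rewrite mul2n -addnn; case: (2 ^ n)%N => // j _; rewrite addSn ltnS addnS ltnS leq_addr.
Qed.

Lemma tr_nonzero (F : finFieldType) m :
  #|F| = (2 ^ m)%N -> (0 < m)%N -> exists z : F, S 1 m z != 0.
Proof.
move=> hF; case: m hF => // m hF _.
apply/existsP; apply: contraT => /existsPn H.
set p : {poly F} := \sum_(i < m.+1) 'X^((2 ^ i)%N).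
have hs : size p = (2 ^ m).+1.
  rewrite /p big_ord_recr /= addrC size_polyDl size_polyXn //.
  by rewrite ltnS size_trpoly.
have p0 : p != 0 by rewrite -size_poly_eq0 hs.
have := max_poly_roots p0 _ (enum_uniq F).
rewrite -cardT hF hs expnS ltnS leqNgt ltn_Pmull ?expn_gt0 //.
apply; apply/allP => z _; rewrite /root /p horner_sum.
have := H z; rewrite negbK => /eqP h; apply/eqP; transitivity (S 1 m.+1 z) => //.
rewrite /S.
by apply: eq_bigr => i _; rewrite hornerXn mul1n.
Qed.

Definition chi (F : finFieldType) m (z : F) : int := (-1) ^+ (tr1 m z != 0).
Definition psi (F : finFieldType) k (z : F) : int := (-1) ^+ (tr1 k z != 0).

Lemma tr1S (F : finFieldType) m (z : F) : tr1 m z = S 1 m z.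
Proof. by apply: eq_bigr => i _; rewrite mul1n. Qed.

Lemma S_frobj (F : finFieldType) m j (z : F) :
  (forall x : F, x ^+ (2 ^ m) = x) -> S 1 m (z ^+ (2 ^ j)) = S 1 m z.
Proof.
move=> hx; elim: j => [|j IH]; first by rewrite expn0 expr1.
rewrite expnS mulnC exprM -{2}(expn1 2) S_frob ?IH // mul1n; exact: hx.
Qed.

Lemma S_sq (F : finFieldType) (chF : 2%N \in [pchar F]) m (z : F) :
  z ^+ (2 ^ m) = z -> (S 1 m z) ^+ 2 = S 1 m z.
Proof. by move=> hz; rewrite -(expn1 2) S_pow // S_frob // mul1n. Qed.

Lemma chiD (F : finFieldType) (chF : 2%N \in [pchar F]) m (a b : F) :
  (forall x : F, x ^+ (2 ^ m) = x) -> chi m (a + b) = chi m a * chi m b.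
Proof.
by move=> hx; rewrite /chi !tr1S SD // sign_add // S_sq.
Qed.

Lemma chi0 (F : finFieldType) m : chi m (0 : F) = 1.
Proof. by rewrite /chi tr1S S0 eqxx. Qed.

Lemma psi0 (F : finFieldType) m : psi m (0 : F) = 1.
Proof. by rewrite /psi tr1S S0 eqxx. Qed.

Lemma psiD (F : finFieldType) (chF : 2%N \in [pchar F]) k (a b : F) :
  a ^+ (2 ^ k) = a -> b ^+ (2 ^ k) = b -> psi k (a + b) = psi k a * psi k b.
Proof.
by move=> ha hb; rewrite /psi !tr1S SD // sign_add // S_sq.
Qed.

Lemma sum_delta (F : finFieldType) (A : {pred F}) (g : F -> int) (w : F) :
  \sum_(c in A) g c * (c == w)%:R = if w \in A then g w else 0.
Proof.
case: (boolP (w \in A)) => hw.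
  rewrite (bigD1 w) //= eqxx mulr1 big1 ?addr0 // => c /andP [_ /negbTE ->].
  by rewrite mulr0.
rewrite big1 // => c hc; have /negbTE -> : c != w by apply: contraNneq hw => <-.
by rewrite mulr0.
Qed.

Lemma shift_sum (F : finFieldType) (f : F -> int) (c : F) :
  \sum_x f x = \sum_x f (x + c).
Proof. by rewrite (reindex_inj (addIr c)). Qed.

Lemma orthF (F : finFieldType) (chF : 2%N \in [pchar F]) m (w : F) :
  #|F| = (2 ^ m)%N -> (0 < m)%N ->
  \sum_x chi m (w * x) = (#|F|)%:R * (w == 0)%:R.
Proof.
move=> hF m0; have hx : forall x : F, x ^+ (2 ^ m) = x by move=> x; rewrite -hF expf_card.
case: (eqVneq w 0) => [->|w0].
  by rewrite mulr1 (eq_bigr (fun _ => 1)) ?sumr_const // => x _; rewrite mul0r chi0.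
have [z0 hz0] := tr_nonzero hF m0.
rewrite mulr0; set s := (\sum_x _).
have : s = - s.
  rewrite {1}/s (shift_sum _ (z0 / w)) /s -sumrN; apply: eq_bigr => x _.
  rewrite mulrDr mulrCA divff // mulr1 chiD // /chi !tr1S.
  have /sq01 [h|h] := S_sq chF (hx z0); first by rewrite h eqxx in hz0.
  by rewrite h oner_neq0 expr1 mulrN1.
by move=> h; lia.
Qed.

Lemma inK (F : finFieldType) k (z : F) : (z \in subfK F k) = (z ^+ (2 ^ k) == z).
Proof. by rewrite inE. Qed.

Lemma fixF (F : finFieldType) m : #|F| = (2 ^ m)%N -> forall x : F, x ^+ (2 ^ m) = x.
Proof. by move=> hF x; rewrite -hF expf_card. Qed.

Lemma mkn k m : (k %| m)%N -> (k * (m %/ k))%N = m.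
Proof. by move=> h; rewrite mulnC divnK. Qed.

Lemma TK (F : finFieldType) (chF : 2%N \in [pchar F]) k m (z : F) :
  #|F| = (2 ^ m)%N -> (k %| m)%N -> (trKM k m z) ^+ (2 ^ k) = trKM k m z.
Proof.
move=> hF hkm; rewrite /trKM -/(S k (m %/ k) z) S_pow // S_frob //.
by rewrite mkn // fixF.
Qed.

Lemma trT (F : finFieldType) (chF : 2%N \in [pchar F]) k m (z : F) :
  (k %| m)%N -> tr1 m z = tr1 k (trKM k m z).
Proof.
move=> hkm; rewrite !tr1S /trKM -/(S k (m %/ k) z) -S_trans //.
by rewrite mkn.
Qed.

Lemma chi_psi (F : finFieldType) (chF : 2%N \in [pchar F]) k m (c z : F) :
  (k %| m)%N -> c ^+ (2 ^ k) = c -> chi m (c * z) = psi k (c * trKM k m z).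
Proof.
move=> hkm hc; rewrite /chi /psi (@trT _ chF k m (c * z) hkm); congr ((-1) ^+ (tr1 k _ != 0)).
exact: SZ.
Qed.

Lemma Kadd (F : finFieldType) (chF : 2%N \in [pchar F]) k (a b : F) :
  a ^+ (2 ^ k) = a -> b ^+ (2 ^ k) = b -> (a + b) ^+ (2 ^ k) = a + b.
Proof. by move=> ha hb; rewrite frobD // ha hb. Qed.

Lemma Kmul (F : finFieldType) k (a b : F) :
  a ^+ (2 ^ k) = a -> b ^+ (2 ^ k) = b -> (a * b) ^+ (2 ^ k) = a * b.
Proof. by move=> ha hb; rewrite exprMn ha hb. Qed.

Lemma orthK (F : finFieldType) (chF : 2%N \in [pchar F]) k m (s : F) :
  #|F| = (2 ^ m)%N -> (0 < m)%N -> (k %| m)%N -> s ^+ (2 ^ k) = s ->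
  \sum_(c in subfK F k) psi k (c * s) = (#|subfK F k|)%:R * (s == 0)%:R.
Proof.
move=> hF m0 hkm hs.
case: (eqVneq s 0) => [->|s0].
  by rewrite mulr1 (eq_bigr (fun _ => 1)) ?sumr_const // => x _; rewrite mulr0 psi0.
have [z0 hz0] := tr_nonzero hF m0.
set c0 := trKM k m (z0 / s).
have hc0 : c0 ^+ (2 ^ k) = c0 by apply: TK.
have hc0s : psi k (c0 * s) = -1.
  rewrite mulrC -(@chi_psi _ chF k m s (z0 / s)) // mulrCA divff // mulr1 /chi tr1S.
  have /sq01 [h|h] := S_sq chF (fixF hF z0); first by rewrite h eqxx in hz0.
  by rewrite h oner_neq0 expr1.
rewrite mulr0; set t := (\sum_(c in _) _).
have : t = - t.
  rewrite {1}/t (reindex_inj (addIr c0)) /t -sumrN /=.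
  apply: eq_big => [c|c hc].
    rewrite !inK; apply/eqP/eqP => h.
      by rewrite -[c](addrK c0) (oppr_pchar2 chF) (Kadd chF) //.
    by rewrite (Kadd chF) //.
  rewrite inK in hc; move/eqP: hc => hc.
  have hc' : c ^+ (2 ^ k) = c.
    by rewrite -[c](addrK c0) (oppr_pchar2 chF) (Kadd chF).
  by rewrite mulrDl (psiD chF) ?hc0s ?mulrN1 //; apply: Kmul.
by move=> h; lia.
Qed.

Lemma eq_char2 (F : finFieldType) (chF : 2%N \in [pchar F]) (a b : F) :
  (a + b == 0) = (a == b).
Proof. by rewrite addr_eq0 oppr_pchar2. Qed.

Lemma fiber (F : finFieldType) (chF : 2%N \in [pchar F]) k m (h : F -> int) (w : F) :
  #|F| = (2 ^ m)%N -> (0 < m)%N -> (k %| m)%N ->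
  (#|subfK F k|)%:R * \sum_z h (trKM k m z) * chi m (w * z)
  = (#|F|)%:R * (if w \in subfK F k then
                  \sum_(t in subfK F k) h t * psi k (w * t) else 0).
Proof.
move=> hF m0 hkm.
set K := subfK F k.
have E1 : forall z, (#|K|)%:R * h (trKM k m z) =
    \sum_(t in K) \sum_(c in K) h t * (chi m (c * z) * psi k (c * t)).
  move=> z.
  have hT := TK chF z hF hkm.
  transitivity (\sum_(t in K) ((#|K|)%:R * h t) * (t == trKM k m z)%:R).
    by rewrite sum_delta inK hT eqxx.
  apply: eq_bigr => t ht; rewrite -mulr_sumr.
  rewrite inK in ht; move/eqP: ht => ht.
  transitivity (h t * \sum_(c in K) psi k (c * (trKM k m z + t))).
    rewrite (@orthK _ chF k m) ?(Kadd chF) // eq_char2 // eq_sym; ring.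
  congr (_ * _); apply: eq_bigr => c hc.
  rewrite inK in hc; move/eqP: hc => hc.
  by rewrite mulrDr (psiD chF) ?(Kmul) // (@chi_psi _ chF k m c z hkm hc).
rewrite mulr_sumr.
transitivity (\sum_z \sum_(t in K) \sum_(c in K)
   h t * (chi m (c * z) * psi k (c * t)) * chi m (w * z)).
  apply: eq_bigr => z _; rewrite mulrA E1 mulr_suml; apply: eq_bigr => t _.
  by rewrite mulr_suml.
rewrite exchange_big /=.
transitivity (\sum_(t in K) \sum_(c in K)
   (h t * psi k (c * t) * (#|F|)%:R) * (c == w)%:R).
  apply: eq_bigr => t _; rewrite exchange_big /=; apply: eq_bigr => c hc.
  rewrite -(eq_char2 chF) -mulrA -(orthF chF _ hF m0) mulr_sumr.
  apply: eq_bigr => z _; rewrite mulrDl (chiD chF); last exact: fixF hF.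
  ring.
rewrite (eq_bigr (fun t => if w \in K then h t * psi k (w * t) * (#|F|)%:R else 0));
  last by move=> t _; rewrite sum_delta.
case: (w \in K); last by rewrite big1 ?mulr0.
by rewrite mulr_sumr; apply: eq_bigr => t _; rewrite mulrC.
Qed.

Lemma pm1 (F : finFieldType) (N : nat) (y : F) :
  (0 < N)%N -> y ^+ N = y -> y != 0 -> y ^+ N.-1 = 1.
Proof.
by move=> N0 hy y0; apply: (mulIf y0); rewrite mul1r -exprSr prednK.
Qed.

Lemma negpow_nz (F : finFieldType) m t (y : F) :
  #|F| = (2 ^ m)%N -> (0 < m)%N -> y != 0 -> negpow m t y = (y ^+ t)^-1.
Proof.
move=> hF m0 y0; rewrite /negpow (negbTE y0) mulnC exprM -exprVn; congr (_ ^+ t).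
have h2 : (2 <= 2 ^ m)%N by rewrite -{1}(expn1 2) leq_pexp2l.
apply: (mulIf y0); rewrite mulVf // -exprSr.
have -> : (2 ^ m - 2).+1 = (2 ^ m).-1 by lia.
by apply: pm1; rewrite ?expn_gt0 // fixF.
Qed.

Lemma negpow0 (F : finFieldType) m t : negpow m t (0 : F) = 0.
Proof. by rewrite /negpow eqxx. Qed.

Lemma pow_ee (F : finFieldType) m e eta (y : F) :
  #|F| = (2 ^ m)%N -> (0 < e)%N -> (0 < eta)%N ->
  (eta * e = 1 %[mod (2 ^ m).-1])%N -> y ^+ (eta * e) = y.
Proof.
move=> hF e0 eta0 heta.
case: (eqVneq y 0) => [->|y0].
  have /negbTE h : (eta * e != 0)%N by rewrite muln_eq0 negb_or -!lt0n e0 eta0.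
  by rewrite expr0n h.
have hN : y ^+ (2 ^ m).-1 = 1 by apply: pm1; rewrite ?expn_gt0 // fixF.
by rewrite -(expr_mod _ hN) heta (expr_mod _ hN) expr1.
Qed.

Lemma Kpow (F : finFieldType) k e l (c : F) :
  c ^+ (2 ^ k) = c -> c != 0 -> e = (2 ^ l)%N %[mod (2 ^ k).-1] ->
  c ^+ e = c ^+ (2 ^ l).
Proof.
move=> hc c0 he.
have hN : c ^+ (2 ^ k).-1 = 1 by apply: pm1; rewrite ?expn_gt0.
by rewrite -(expr_mod _ hN) he (expr_mod _ hN).
Qed.

Lemma sum_bal (F : finFieldType) k (P : F -> bool) :
  balancedOn k P -> \sum_(t in subfK F k) (-1 : int) ^+ (P t) = 0.
Proof.
rewrite /balancedOn => hb.
rewrite (bigID P) /=.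
rewrite (eq_bigl (fun t => t \in [set z in subfK F k | P z])); last by move=> t; rewrite inE.
rewrite [X in _ + X](eq_bigl (fun t => t \in [set z in subfK F k | ~~ P z])); last by move=> t; rewrite inE.
rewrite (eq_bigr (fun _ => -1)); last by move=> t; rewrite inE => /andP [_ ->].
rewrite [X in _ + X](eq_bigr (fun _ => 1)); last by move=> t; rewrite inE => /andP [_ /negbTE ->].
by rewrite !sumr_const hb mulNrn addNr.
Qed.

Lemma chi_frob (F : finFieldType) m j (z : F) :
  #|F| = (2 ^ m)%N -> chi m (z ^+ (2 ^ j)) = chi m z.
Proof. by move=> hF; rewrite /chi !tr1S S_frobj //; apply: fixF. Qed.

Unset Implicit Arguments.

Theorem lemma4p2 (F : finFieldType) (m k e l eta : nat) (P : F -> bool) :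
  #|F| = (2 ^ m)%N -> (2%N \in [pchar F]) ->
  (0 < m)%N -> (0 < k)%N -> (0 < e)%N -> (l <= m)%N -> (k %| m)%N ->
  e = (2 ^ l)%N %[mod (2 ^ k).-1] ->
  coprime (2 ^ m).-1 e ->
  (0 < eta)%N -> (eta * e = 1 %[mod (2 ^ m).-1])%N ->
  balancedOn k P ->
  let g := fun x y : F => P (trKM k m (x * negpow m eta y)) in
  forall u v : F,
    walsh2 m g u v
      = (2 ^ m)%:Z * (-1) ^+ (P ((trKM k m (v * negpow m e u)) ^+ (2 ^ (m - l))))
    /\ P ((trKM k m (v * negpow m e u)) ^+ (2 ^ (m - l)))
       = P (trKM k m (v ^+ (2 ^ (m - l)) * negpow m e (u ^+ (2 ^ (m - l))))).
Proof.
move=> hF chF m0 k0 e0 hl hkm he hcop eta0 heta hbal g u v.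
set K := subfK F k.
set H := fun t : F => (-1 : int) ^+ P t.
set b := v * negpow m e u.
have hx := fixF hF.
have hTK : forall z, (trKM k m z) ^+ (2 ^ k) = trKM k m z :=
  fun z => TK chF z hF hkm.
have hTpow : forall j z, (trKM k m z) ^+ (2 ^ j) = trKM k m (z ^+ (2 ^ j)) :=
  fun j z => S_pow chF _ _ j z.
split; last first.
  rewrite hTpow exprMn; congr (P (trKM k m (_ * _))).
  rewrite /negpow expf_eq0 expn_gt0 /=; case: (u == 0); first by rewrite zero_pow2.
  by rewrite -!exprM mulnC.
set a := (trKM k m b) ^+ (2 ^ (m - l)).
have aK : a ^+ (2 ^ k) = a by rewrite /a -exprM mulnC exprM hTK.
set Inner := fun y => \sum_x H (trKM k m (x * negpow m eta y)) * chi m (u * x).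
have hW : walsh2 m g u v = \sum_y chi m (v * y) * Inner y.
  rewrite /walsh2 exchange_big /=; apply: eq_bigr => y _.
  rewrite /Inner mulr_sumr; apply: eq_bigr => x _.
  have E := chiD chF (u * x) (v * y) hx; rewrite /chi in E.
  rewrite /g /H /chi E; ring.
have nK0 : (#|K|)%:R != 0 :> int.
  by rewrite pnatr_eq0 -lt0n; apply/card_gt0P; exists 0; rewrite inK zero_pow2.
have hFZ : (#|F|)%:R = (2 ^ m)%:Z :> int by rewrite hF natz.
set Q := fun c => if c \in K then \sum_(t in K) H t * psi k (c * t) else 0.
have Q0 : Q 0 = 0.
  rewrite /Q inK zero_pow2 eqxx /=.
  transitivity (\sum_(t in K) H t); last exact: sum_bal hbal.
  apply: eq_bigr => t _.
  by rewrite mul0r psi0 mulr1.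
have T0 : trKM k m 0 = 0 := S0 F k (m %/ k).
have Inner0 : Inner 0 = H (trKM k m 0) * (#|F|)%:R * (u == 0)%:R.
  rewrite /Inner negpow0 (eq_bigr (fun x => H (trKM k m 0) * chi m (u * x))); last first.
    by move=> x _; rewrite mulr0.
  by rewrite -mulr_sumr (orthF chF _ hF m0) mulrA.
have InnerNZ : forall y, y != 0 -> (#|K|)%:R * Inner y = (#|F|)%:R * Q (u * y ^+ eta).
  move=> y y0; have r0 : y ^+ eta != 0 by rewrite expf_neq0.
  rewrite /Inner (reindex_inj (mulIf r0)) /= (negpow_nz _ hF m0 y0).
  have -> : \sum_x H (trKM k m (x * y ^+ eta * (y ^+ eta)^-1)) * chi m (u * (x * y ^+ eta))
         = \sum_z H (trKM k m z) * chi m ((u * y ^+ eta) * z).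
    by apply: eq_bigr => x _; rewrite mulfK // mulrA mulrAC.
  exact: (@fiber _ chF k m H (u * y ^+ eta) hF m0 hkm).
case: (eqVneq u 0) => [u0|u0].
  have a0 : a = 0 by rewrite /a /b u0 negpow0 mulr0 T0 zero_pow2.
  rewrite hW a0 (bigD1 0) //= big1 => [|y y0].
    by rewrite mulr0 chi0 Inner0 u0 eqxx T0 mulr1 mul1r addr0 hFZ mulrC.
  have := InnerNZ y y0; rewrite u0 mul0r Q0 mulr0 => /eqP.
  by rewrite mulf_eq0 (negbTE nK0) /= => /eqP ->; rewrite mulr0.
have InnerAll : forall y, (#|K|)%:R * Inner y = (#|F|)%:R * Q (u * y ^+ eta).
  move=> y; case: (eqVneq y 0) => [->|y0]; last exact: InnerNZ.
  by rewrite Inner0 (negbTE u0) !mulr0 expr0n (gtn_eqF eta0) mulr0 Q0 mulr0.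
apply: (mulfI nK0).
rewrite hW mulr_sumr.
transitivity ((#|F|)%:R * \sum_y chi m (v * y) * Q (u * y ^+ eta)).
  rewrite mulr_sumr; apply: eq_bigr => y _.
  by rewrite mulrCA InnerAll mulrCA.
set G := fun c => chi m (v * (c / u) ^+ e) * Q c.
have phiinj : injective (fun y : F => u * y ^+ eta).
  move=> y1 y2 /(mulfI u0) h.
  by rewrite -(pow_ee y1 hF e0 eta0 heta) -(pow_ee y2 hF e0 eta0 heta) !exprM h.
have -> : \sum_y chi m (v * y) * Q (u * y ^+ eta) = \sum_c G c.
  rewrite [RHS](reindex_inj phiinj) /G; apply: eq_bigr => y _.
  congr (chi m (v * _) * _).
  by rewrite mulrC mulKf // -exprM (pow_ee y hF e0 eta0 heta).
have Ga : forall c, c \in K -> chi m (v * (c / u) ^+ e) = psi k (c * a).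
  move=> c; rewrite inK => /eqP hc.
  case: (eqVneq c 0) => [->|c0].
    by rewrite mul0r expr0n (gtn_eqF e0) mulr0 chi0 mul0r psi0.
  rewrite exprMn (Kpow hc c0 he) exprVn -(negpow_nz e hF m0 u0).
  rewrite mulrCA -/b -(chi_frob (m - l) _ hF) exprMn -exprM -expnD subnKC //.
  by rewrite hx (@chi_psi _ chF k m c _ hkm hc) -hTpow.
have hG : \sum_c G c = (#|K|)%:R * H a.
  transitivity (\sum_(c in K) psi k (c * a) * \sum_(t in K) H t * psi k (c * t)).
    rewrite [RHS]big_mkcond /=; apply: eq_bigr => c _; rewrite /G /Q.
    by case: ifP => hc; [rewrite Ga | rewrite mulr0].
  transitivity (\sum_(c in K) \sum_(t in K) H t * psi k (c * (a + t))).
    apply: eq_bigr => c; rewrite inK => /eqP hc; rewrite mulr_sumr.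
    apply: eq_bigr => t; rewrite inK => /eqP ht.
    by rewrite mulrDr (psiD chF) ?Kmul // mulrCA.
  rewrite exchange_big /=.
  transitivity (\sum_(t in K) ((#|K|)%:R * H t) * (t == a)%:R).
    apply: eq_bigr => t; rewrite inK => /eqP ht.
    rewrite -mulr_sumr (@orthK _ chF k m) ?(Kadd chF) // (eq_char2 chF) eq_sym.
    by rewrite mulrCA mulrA.
  by rewrite sum_delta inK aK eqxx.
by rewrite hG hFZ mulrCA.
Qed.
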